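(* Let $\ell$ be a positive integer. If a partial $(n,k,t)_\lambda$-system has a nondeficient $\ell$-presequencing, then it has a cyclically $\ell$-good sequencing.
   Context: For positive integers $n,k,t,\lambda$ with $n \geq k > t \geq 2$, a partial $(n,k,t)_\lambda$-system is a pair $(X,\mathcal{B})$ where $X$ is an $n$-set of vertices and $\mathcal{B}$ is a collection of $k$-subsets of $X$ (blocks) such that each $t$-subset of $X$ is contained in at most $\lambda$ blocks. An independent set is a subset of $X$ containing no block. A sequencing is a bijection $\varphi:\mathbb{Z}_n\to X$; a set $S$ is cyclically consecutive if $S=\{\varphi(i),\ldots,\varphi(i+|S|-1)\}$ for some $i\in\mathbb{Z}_n$ (addition mod $n$); the sequencing is cyclically $\ell$-good if every set of $\ell$ cyclically consecutive vertices is independent. An $\ell$-buffered set is a triple $(S,S^{L},S^{R})$ with $S^{L},S^{R}\subseteq S$ (buffers) such that: (B1) if $|S|\le \ell-2$ then $S^{L}=S^{R}=S$; (B2) if $\ell-1\le |S|\le 2\ell-2$ then $|S^{L}|=|S^{R}|=\ell-1$ and $S^{L}\cup S^{R}=S$; (B3) if $|S|\ge 2\ell-1$ then $|S^{L}|=|S^{R}|=\ell-1$ and $S^{L}\cap S^{R}=\emptyset$. It is deficient if $|S|\le \ell-2$ and nondeficient otherwise. An $\ell$-presequencing of $(X,\mathcal{B})$ is a tuple $(X_0,\ldots,X_{s-1})$ of $\ell$-buffered sets (classes) whose underlying sets partition $X$, such that (P1) each $X_i$ is independent, and (P2) for each $i\in\mathbb{Z}_s$, $X_i^{R}\cup X_{i+1}^{L}$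 is independent (indices mod $s$). It is nondeficient if every class is nondeficient. *)

(* Defs.v *)
From mathcomp Require Import all_boot.

Set Implicit Arguments. Unset Strict Implicit. Unset Printing Implicit Defensive.

(* A "collection" of blocks is a sequence (repetitions allowed). *)

Definition partial_system (X : finType) (n k t lam : nat) (B : seq {set X}) : Prop :=
  [/\ #|X| = n, k <= n, t < k, 2 <= t & 0 < lam] /\
  (forall b, b \in B -> #|b| = k) /\
  (forall T : {set X}, #|T| = t -> count (fun b : {set X} => T \subset b) B <= lam).

Definition independent (X : finType) (B : seq {set X}) (S : {set X}) : Prop :=
  forall b, b \in B -> ~~ (b \subset S).

(* S is cyclically consecutive w.r.t. the sequencing phi : Z_n -> X;
   i + j (mod n) is computed as j iterations of the cyclic successor ordS. *)
Definition cyc_consecutive (X : finType) (n : nat) (phi : 'I_n -> X) (S : {set X}) : Prop :=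
  exists i : 'I_n, S = [set phi (iter j (@ordS n) i) | j : 'I_#|S|].

Definition cyclically_good (X : finType) (B : seq {set X}) (n l : nat) (phi : 'I_n -> X) : Prop :=
  forall S : {set X}, #|S| = l -> cyc_consecutive phi S -> independent B S.

(* l-buffered set (S, SL, SR); the conditions |S| <= l-2 etc. are written
   without truncated subtraction. *)
Definition buffered (X : finType) (l : nat) (S SL SR : {set X}) : Prop :=
  [/\ SL \subset S, SR \subset S,
      (#|S| + 2 <= l -> SL = S /\ SR = S),
      (l <= #|S| + 1 -> #|S| + 2 <= 2 * l ->
         [/\ #|SL| + 1 = l, #|SR| + 1 = l & SL :|: SR = S]) &
      (2 * l <= #|S| + 1 ->
         [/\ #|SL| + 1 = l, #|SR| + 1 = l & [disjoint SL & SR]])].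

Definition nondeficient (X : finType) (l : nat) (S : {set X}) : Prop :=
  ~ (#|S| + 2 <= l).

Definition presequencing (X : finType) (B : seq {set X}) (l s : nat)
  (S SL SR : 'I_s -> {set X}) : Prop :=
  [/\ (forall i, buffered l (S i) (SL i) (SR i)),
      (forall i j, i != j -> [disjoint S i & S j]),
      \bigcup_(i < s) S i = [set: X],
      (forall i, independent B (S i)) &
      (forall i, independent B (SR i :|: SL (ordS i)))].

Definition has_nondeficient_presequencing (X : finType) (B : seq {set X}) (l : nat) : Prop :=
  exists s (S SL SR : 'I_s -> {set X}),
    presequencing B l S SL SR /\ forall i, nondeficient l (S i).

(* Main.v *)
Require Import Defs.
From mathcomp Require Import all_boot.
From mathcomp Require Import zify.
Set Implicit Arguments. Unset Strict Implicit.

Section Flat.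
Variable T : Type.
Implicit Types ss : seq (seq T).

Definition off ss i := sumn (shape (take i ss)).

Lemma nth_flatten_off x0 ss i k : i < size ss ->
  nth x0 (flatten ss) (off ss i + k) = nth x0 (nth [::] ss i ++ flatten (drop i.+1 ss)) k.
Proof.
rewrite /off; elim: ss i => [|s ss IH] [|i] //= Hi.
by rewrite drop0.
rewrite nth_cat ltnNge -addnA leq_addr /= addKn; exact: IH.
Qed.

Lemma off_succ ss i : i < size ss -> off ss i.+1 = off ss i + size (nth [::] ss i).
Proof.
rewrite /off; elim: ss i => [|s ss IH] [|i] //= Hi.
by rewrite take0 addn0.
by rewrite IH // addnA.
Qed.

Lemma off_le ss i : off ss i <= sumn (shape ss).
Proof. by rewrite /off -[X in _ <= sumn (shape X)](cat_take_drop i) /shape map_cat sumn_cat leq_addr. Qed.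

Lemma off_size ss : off ss (size ss) = sumn (shape ss).
Proof. by rewrite /off take_size. Qed.

Lemma off0 ss : off ss 0 = 0.
Proof. by rewrite /off take0. Qed.

Lemma decomp ss q : q < sumn (shape ss) -> exists i k,
  [/\ i < size ss, k < size (nth [::] ss i) & q = off ss i + k].
Proof.
rewrite /off; elim: ss q => [|s ss IH] q //= Hq.
case: (ltnP q (size s)) => Hs.
  by exists 0, q; rewrite take0.
have [i [k [H1 H2 H3]]] := IH (q - size s) ltac:(lia).
exists i.+1, k; split => //=; lia.
Qed.

Lemma window x0 ss l (PS PL PR : nat -> T -> Prop) p :
  let L := flatten ss in let N := sumn (shape ss) in
  (forall i k, i < size ss -> k < size (nth [::] ss i) -> PS i (nth x0 (nth [::] ss i) k)) ->
  (forall i k, i < size ss -> k < size (nth [::] ss i) -> k < l.-1 -> PL i (nth x0 (nth [::] ss i) k)) ->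
  (forall i k, i < size ss -> k < size (nth [::] ss i) -> size (nth [::] ss i) - l.-1 <= k -> PR i (nth x0 (nth [::] ss i) k)) ->
  (forall i, i < size ss -> l.-1 <= size (nth [::] ss i)) ->
  0 < l -> l <= N -> p < N ->
  (exists2 i, i < size ss & forall j, j < l -> PS i (nth x0 L ((p + j) %% N))) \/
  (exists2 i, i < size ss & forall j, j < l -> PR i (nth x0 L ((p + j) %% N)) \/ PL (i.+1 %% size ss) (nth x0 L ((p + j) %% N))).
Proof.
move=> L N HS HL HR Hsz l0 lN pN.
have [i [k [Hi Hk ->]]] := decomp pN.
set sz := size (nth [::] ss i).
have oN := off_le ss i.+1.
rewrite off_succ // in oN.
case: (leqP (k + l) sz) => Hkl.
  left; exists i => // j Hj.
  rewrite modn_small; last by rewrite /N; lia.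
  rewrite -addnA nth_flatten_off // nth_cat ifT; last by rewrite /sz in Hkl; lia.
  apply: HS => //; lia.
right; exists i => // j Hj.
case: (ltnP (k + j) sz) => Hkj.
  left; rewrite modn_small; last by rewrite /N; lia.
  rewrite -addnA nth_flatten_off // nth_cat ifT; last by [].
  apply: HR => //; rewrite /sz in Hkj Hkl *; lia.
right.
have -> : off ss i + k + j = off ss i.+1 + (k + j - sz) by rewrite off_succ //; rewrite /sz in Hkj *; lia.
set m := k + j - sz.
have Hm : m < l.-1 by rewrite /m; lia.
case: (ltnP i.+1 (size ss)) => Hi1.
  have Hsz1 := Hsz _ Hi1.
  have oN2 := off_le ss i.+2.
  rewrite off_succ // in oN2.
  rewrite (modn_small Hi1) modn_small; last by rewrite /N; lia.
  rewrite nth_flatten_off // nth_cat ifT; last by lia.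
  apply: HL => //; lia.
have Ei : i.+1 = size ss by lia.
have s0 : 0 < size ss by lia.
have Hsz0 := Hsz _ s0.
rewrite Ei modnn off_size -/N modnDl modn_small; last by lia.
have := nth_flatten_off x0 m s0; rewrite off0 add0n => ->.
rewrite nth_cat ifT; last by lia.
apply: HL => //; lia.
Qed.
End Flat.

Lemma nth_cat_in1 (T : eqType) x0 (s1 s2 : seq T) k : k < size s1 -> nth x0 (s1 ++ s2) k \in s1.
Proof. by move=> H; rewrite nth_cat H mem_nth. Qed.

Lemma nth_cat_in2 (T : eqType) x0 (s1 s2 : seq T) k : size s1 <= k -> k < size s1 + size s2 ->
  nth x0 (s1 ++ s2) k \in s2.
Proof. by move=> H1 H2; rewrite nth_cat ltnNge H1 /= mem_nth //; lia. Qed.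

Lemma uniq_flatten_idx (T : eqType) (ss : seq (seq T)) :
  (forall i, i < size ss -> uniq (nth [::] ss i)) ->
  (forall i j x, i < size ss -> j < size ss -> x \in nth [::] ss i -> x \in nth [::] ss j -> i = j) ->
  uniq (flatten ss).
Proof.
elim: ss => [|s ss IH] //= Hu Hd.
rewrite cat_uniq (Hu 0) //=.
apply/andP; split.
  apply/hasPn => x.
  move=> /flattenP [t].
  move=> /(nthP [::]) [j Hj <-] xt; apply/negP => xs.
  by have := Hd 0 j.+1 x erefl Hj xs xt.
apply: IH => [i Hi|i j x Hi Hj H1 H2]; first exact: (Hu i.+1).
by have [] := Hd i.+1 j.+1 x Hi Hj H1 H2.
Qed.

Section Cls.
Variable X : finType.
Definition cseq (S SL SR : {set X}) :=
  enum (SL :\: SR) ++ enum (S :\: (SL :|: SR)) ++ enum (SL :&: SR) ++ enum (SR :\: SL).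

Variables (S SL SR : {set X}).
Hypotheses (HL : SL \subset S) (HR : SR \subset S).

Lemma cseq_mem x : (x \in cseq S SL SR) = (x \in S).
Proof.
rewrite /cseq !mem_cat !mem_enum !inE.
case xL: (x \in SL).
  by have := subsetP HL x; rewrite xL => /(_ isT) ->; case: (x \in SR).
case xR: (x \in SR).
  by have := subsetP HR x; rewrite xR => /(_ isT) ->.
by rewrite /= !orbF.
Qed.

Lemma cseq_uniq : uniq (cseq S SL SR).
Proof.
rewrite /cseq !cat_uniq !enum_uniq !has_cat /=.
rewrite !negb_or andbT; repeat (apply/andP; split);
  apply/hasPn => x; rewrite !mem_enum !inE;
  by case: (x \in SL); case: (x \in SR); case: (x \in S).
Qed.

Lemma cseq_size : size (cseq S SL SR) = #|S|.
Proof.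
apply/esym; rewrite -(card_uniqP cseq_uniq); apply: eq_card => x.
by rewrite cseq_mem.
Qed.

Lemma size_parts : size (cseq S SL SR) =
  #|SL :\: SR| + #|S :\: (SL :|: SR)| + #|SL :&: SR| + #|SR :\: SL|.
Proof. by rewrite /cseq !size_cat -!cardE !addnA. Qed.

Variable l : nat.
Hypotheses (Hb : buffered l S SL SR) (Hn : nondeficient l S).

Lemma cardLR : #|SL| + 1 = l /\ #|SR| + 1 = l.
Proof.
case: Hb => _ _ _ H2 H3; move: Hn; rewrite /nondeficient => Hn'.
case: (leqP (#|S| + 2) (2 * l)) => H.
  by have [] := H2 ltac:(lia) H.
by have [] := H3 ltac:(lia).
Qed.

Lemma cseq_ge : l.-1 <= size (cseq S SL SR).
Proof. by rewrite cseq_size; move: Hn; rewrite /nondeficient; lia. Qed.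

Lemma cseq_suf x0 k : k < size (cseq S SL SR) -> size (cseq S SL SR) - l.-1 <= k ->
  nth x0 (cseq S SL SR) k \in SR.
Proof.
have [_ cR] := cardLR.
have cI := cardsID SL SR; rewrite setIC in cI.
move=> H1 H2.
have : nth x0 (cseq S SL SR) k \in enum (SL :&: SR) ++ enum (SR :\: SL).
  rewrite /cseq catA; apply: nth_cat_in2; rewrite size_cat -!cardE;
  move: H1 H2; rewrite size_parts; rewrite ?size_cat -?cardE -?subn1; lia.
by rewrite mem_cat !mem_enum !inE => /orP [/andP [] | /andP []].
Qed.

Lemma cseq_pre x0 k : k < l.-1 -> nth x0 (cseq S SL SR) k \in SL.
Proof.
have [cL _] := cardLR.
case: Hb => _ _ _ H2 H3; move: Hn; rewrite /nondeficient => Hn' Hk.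
case: (leqP (#|S| + 2) (2 * l)) => H.
  have [_ _ E] := H2 ltac:(lia) H.
  have cI := cardsID SR SL.
  have : nth x0 (cseq S SL SR) k \in enum (SL :\: SR) ++ enum (SL :&: SR).
    rewrite /cseq E setDv enum_set0 cat0s catA; apply: nth_cat_in1.
    rewrite size_cat -!cardE; lia.
  by rewrite mem_cat !mem_enum !inE => /orP [/andP [] | /andP []].
have [_ _ D] := H3 ltac:(lia).
have : nth x0 (cseq S SL SR) k \in enum (SL :\: SR).
  apply: nth_cat_in1; rewrite -cardE (setDidPl D); lia.
by rewrite mem_enum inE => /andP [].
Qed.
End Cls.

Lemma iter_ordS n (i : 'I_n) j : val (iter j (@ordS n) i) = (i + j) %% n.
Proof.
elim: j => [|j IH] /=; first by rewrite addn0 modn_small.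
by rewrite IH -addn1 modnDml addn1 addnS.
Qed.

Lemma indep_sub (X : finType) (B : seq {set X}) (S T : {set X}) :
  independent B T -> S \subset T -> independent B S.
Proof.
move=> HT ST b bB; apply/negP => bS.
by have := HT b bB; rewrite (subset_trans bS ST).
Qed.

Theorem lemma5 (X : finType) (n k t lam l : nat) (B : seq {set X}) :
  0 < l ->
  partial_system n k t lam B ->
  has_nondeficient_presequencing B l ->
  exists phi : 'I_n -> X, bijective phi /\ cyclically_good B l phi.
Proof.
move=> l0 [[cardX kn tk t2 lam0] _] [s [S [SL [SR [[Hbuf Hdisj Hcov Hind HindB] Hnd]]]]].
subst n.
have : 0 < #|X| by lia.
case/card_gt0P => x0 _.
case: s S SL SR Hbuf Hdisj Hcov Hind HindB Hnd => [|s'] S SL SR Hbuf Hdisj Hcov Hind HindB Hnd.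
  by have := in_setT x0; rewrite -Hcov big_ord0 inE.
pose cn (i : nat) := cseq (S (inord i)) (SL (inord i)) (SR (inord i)).
pose ss := [seq cn i | i <- iota 0 s'.+1].
have sz : size ss = s'.+1 by rewrite size_map size_iota.
have nthss i : i < s'.+1 -> nth [::] ss i = cn i.
  by move=> Hi; rewrite (nth_map 0) ?size_iota // nth_iota.
have subL i : SL i \subset S i by case: (Hbuf i).
have subR i : SR i \subset S i by case: (Hbuf i).
pose L := flatten ss.
have memL x : x \in L.
  have := in_setT x; rewrite -Hcov => /bigcupP [i _ xi].
  apply/flattenP; exists (cn i); last by rewrite /cn inord_val cseq_mem.
  by apply/mapP; exists (val i) => //; rewrite mem_iota /=.
have uL : uniq L.
  apply: uniq_flatten_idx; rewrite sz.
    by move=> i Hi; rewrite nthss //; exact: cseq_uniq.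
  move=> i j x Hi Hj; rewrite !nthss //.
  rewrite /cn !cseq_mem // => xi xj.
  case: (eqVneq (inord i : 'I_s'.+1) (inord j)) => E.
    by move/(congr1 val): E; rewrite /= !inordK.
  by have := Hdisj _ _ E; move/disjointFr => /(_ x xi); rewrite xj.
have sL : size L = #|X|.
  rewrite -(card_uniqP uL); apply: eq_card => x; by rewrite memL.
have sN : sumn (shape ss) = #|X| by rewrite -size_flatten.
pose phi (j : 'I_#|X|) := nth x0 L j.
exists phi; split.
  apply: inj_card_bij; last by rewrite card_ord.
  move=> i j /eqP; rewrite /phi nth_uniq ?sL // => /eqP; exact: val_inj.
move=> S0 HS0 [i0 HSeq].
have lN : l <= #|X| by rewrite -HS0 max_card.
have HS' : forall i kk, i < size ss -> kk < size (nth [::] ss i) -> nth x0 (nth [::] ss i) kk \in S (inord i).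
  move=> i kk Hi Hk; rewrite sz in Hi; rewrite nthss // in Hk *.
  by rewrite -(cseq_mem (subL (inord i)) (subR (inord i))) mem_nth.
have HL' : forall i kk, i < size ss -> kk < size (nth [::] ss i) -> kk < l.-1 -> nth x0 (nth [::] ss i) kk \in SL (inord i).
  move=> i kk Hi Hk Hk2; rewrite sz in Hi; rewrite nthss //; exact: cseq_pre.
have HR' : forall i kk, i < size ss -> kk < size (nth [::] ss i) -> size (nth [::] ss i) - l.-1 <= kk -> nth x0 (nth [::] ss i) kk \in SR (inord i).
  move=> i kk Hi Hk Hk2; rewrite sz in Hi; rewrite nthss // in Hk Hk2 *; exact: cseq_suf.
have Hsz' : forall i, i < size ss -> l.-1 <= size (nth [::] ss i).
  move=> i Hi; rewrite sz in Hi; rewrite nthss //; exact: cseq_ge.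
have := window (x0 := x0) (ss := ss) (l:=l) (PS := fun i x => x \in S (inord i))
  (PL := fun i x => x \in SL (inord i)) (PR := fun i x => x \in SR (inord i)) (p := i0) HS' HL' HR' Hsz' l0.
rewrite sz sN => /(_ lN (ltn_ord i0)).
case=> [[i Hi Hw] | [i Hi Hw]].
  + apply: (indep_sub (Hind (inord i))); apply/subsetP => x.
    rewrite HSeq => /imsetP [j _ ->]; rewrite /phi iter_ordS.
    apply: Hw; rewrite -HS0; exact: ltn_ord.
  + have E : ordS (inord i : 'I_s'.+1) = inord (i.+1 %% s'.+1).
      by apply: val_inj; rewrite /= !inordK // ltn_mod.
    apply: (indep_sub (HindB (inord i))); apply/subsetP => x.
    rewrite HSeq => /imsetP [j _ ->]; rewrite /phi iter_ordS E inE.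
    apply/orP; apply: Hw; rewrite -HS0; exact: ltn_ord.
Qed.
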